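(* Let $U$ be a Banach space and $(u_n)_{n\ge1}$ a convergent sequence in $U$. Let $A_1,A_2,\ldots\in\mathcal{L}(U)$ be bounded linear operators such that there exists $c<1$ with $\|A_nu\|\le c\|u\|$ for all $u\in U$ and all $n\ge1$, and such that for every $u\in U$ the sequence $(A_nu)_{n\ge1}$ converges in $U$. Let $(v_n)_{n\ge1}\subset U$ satisfy $v_{n+1}=A_nv_n+u_n$ for all $n\ge1$. Then $(v_n)_{n\ge1}$ converges in $U$. *)

(* Defs.v *)
From HB Require Import structures.
From mathcomp Require Import all_boot all_order all_algebra.
From mathcomp Require Import all_classical all_reals all_analysis.

(* Main.v *)
Require Import Defs.
From HB Require Import structures.
From mathcomp Require Import all_boot all_order all_algebra.
From mathcomp Require Import all_classical all_reals all_analysis.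
From mathcomp Require Import lra.
Import Order.TTheory GRing.Theory Num.Theory.
Import numFieldNormedType.Exports.
Local Open Scope ring_scope.
Local Open Scope classical_set_scope.
Lemma rec_cvg0 (R : realType) (a d : nat -> R) (q : R) :
  0 <= q -> q < 1 -> (forall n, 0 <= a n) ->
  (forall n, a n.+1 <= q * a n + d n) -> d @ \oo --> 0 -> a @ \oo --> 0.
Proof.
move=> q0 q1 a0 ha hd; apply/cvgrPdist_lt => e e0.
have e2 : 0 < e / 2 by rewrite divr_gt0.
have eq0 : 0 < e / 2 * (1 - q) by rewrite mulr_gt0 // subr_gt0.
move/cvgrPdist_lt: hd => /(_ _ eq0) [N _ HN].
have bnd k : a (N + k)%N <= q ^+ k * a N + e / 2.
  elim: k => [|k IH]; first by rewrite addn0 expr0 mul1r lerDl ltW.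
  rewrite addnS; apply: (le_trans (ha _)).
  have dN : d (N + k)%N <= e / 2 * (1 - q).
    have := HN (N + k)%N (leq_addr _ _); rewrite /= sub0r normrN => /ltW.
    exact: le_trans (ler_norm _).
  apply: (le_trans (lerD (ler_wpM2l q0 IH) dN)).
  by rewrite exprS mulrDr !mulrA mulrBr mulr1; lra.
have qn : `|q| < 1 by rewrite ger0_norm.
have := cvg_geometric (a N) qn; move/cvgrPdist_lt => /(_ _ e2) [M _ HM].
exists (N + M)%N => // n /= Hn.
rewrite sub0r normrN ger0_norm //.
have -> : n = (N + (n - N))%N by rewrite subnKC // (leq_trans (leq_addr _ _) Hn).
apply: (le_lt_trans (bnd _)).
have := HM (n - N)%N; rewrite /= leq_subRL ?(leq_trans (leq_addr _ _) Hn) //.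
move=> /(_ Hn); rewrite sub0r normrN => H.
have : a N * q ^+ (n - N) < e / 2 by apply: le_lt_trans (ler_norm _) H.
rewrite mulrC; lra.
Qed.

Theorem lemmaA1 (R : realType) (U : completeNormedModType R)
  (u : nat -> U) (A : nat -> {linear U -> U}) (v : nat -> U) (c : R) :
  cvg (u @ \oo) ->
  c < 1 ->
  (forall (n : nat) (x : U), `|A n x| <= c * `|x|) ->
  (forall x : U, cvg ((fun n => A n x) @ \oo)) ->
  (forall n : nat, v n.+1 = A n (v n) + u n) ->
  cvg (v @ \oo).
Proof.
move=> cu c1 hA cA hv.
pose c' := Num.max c 0.
have c'0 : 0 <= c' by rewrite le_max lexx orbT.
have c'1 : c' < 1 by rewrite gt_max c1 ltr01.
have hA' n x : `|A n x| <= c' * `|x|.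
  by apply: (le_trans (hA n x)); rewrite ler_wpM2r // le_max lexx.
pose us := lim (u @ \oo).
have hu : u @ \oo --> us := cu.
pose L x := lim ((fun n => A n x) @ \oo).
have hL x : (fun n => A n x) @ \oo --> L x := cA x.
have Llip x y : `|L x - L y| <= c' * `|x - y|.
  have h2 : `|A n x - A n y| @[n --> \oo] --> `|L x - L y|.
    by apply: cvg_norm; apply: cvgB.
  rewrite -(cvg_lim _ h2); last exact: norm_hausdorff.
  apply: limr_le; first by apply/cvg_ex; eexists; exact: h2.
  by apply: nearW => n /=; rewrite -linearB.
pose f := totalfun (fun x => L x + us).
have ctr : is_contraction f.
  exists (NngNum c'0); split => //=.
  move=> [x y] _ /=. rewrite opprD addrACA subrr addr0. exact: Llip.
have [w _ wfix] := banach_fixed_point ctr (@closedT _) (ex_intro _ 0 I).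
rewrite /= in wfix.
pose a n := `|v n - w|.
pose d n := `|A n w - L w| + `|u n - us|.
have ha n : a n.+1 <= c' * a n + d n.
  have e : v n.+1 - w = A n (v n - w) + (A n w - L w) + (u n - us).
    rewrite hv linearB /= [in LHS]wfix.
    rewrite -[A n (v n) - A n w + _]addrA (addrA (- A n w)) addNr add0r.
    by rewrite opprD !addrA (addrAC (A n (v n)) (u n)).
  rewrite /a e /d; apply: (le_trans (ler_normD _ _)).
  rewrite [in leRHS]addrA lerD2r; apply: (le_trans (ler_normD _ _)).
  by rewrite lerD2r.
have hd : d @ \oo --> 0.
  rewrite -[0]addr0; apply: cvgD.
    have h : `|A n w - L w| @[n --> \oo] --> `|L w - L w|.
      by apply: cvg_norm; apply: cvgB => //; exact: cvg_cst.
    by rewrite subrr normr0 in h.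
  have h : `|u n - us| @[n --> \oo] --> `|us - us|.
    by apply: cvg_norm; apply: cvgB => //; exact: cvg_cst.
  by rewrite subrr normr0 in h.
have a0 := @rec_cvg0 _ a d c' c'0 c'1 (fun n => normr_ge0 _) ha hd.
apply/cvg_ex; exists w.
have e0 : (fun n => v n - w) @ \oo --> 0 by apply/norm_cvg0P; exact: a0.
have h : (v n - w + w) @[n --> \oo] --> 0 + w.
  by apply: cvgD => //; exact: cvg_cst.
rewrite add0r in h; move: h.
by apply: cvg_trans; apply: near_eq_cvg; apply: nearW => n /=; rewrite subrK.
Qed.
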